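(* Let $M$ be a unicyclic partial multiplication matrix. There is a bound $B$, depending only on $M$, such that for every $M$-coil $\pi$ and every $M$-gridding $\pi^\#$ of $\pi$, the gridded permutation $\pi^\#$ has at most $B$ misplaced points.
   Context: A gridding matrix has entries in $\{0,1,-1\}$; an $m\times n$ one has $m$ columns, $n$ rows, $M_{ij}$ in column $i$ from the left and row $j$ from the bottom. An $M$-gridding of a permutation $\pi$ of length $L$ is a choice of vertical lines $\tfrac12=v_0\le\dots\le v_m=L+\tfrac12$ and horizontal lines $\tfrac12=h_0\le\dots\le h_n=L+\tfrac12$, not through points of $\pi$, such that in each cell $C_{ij}=\{v_{i-1}<x<v_i,\ h_{j-1}<y<h_j\}$ the points of $\pi$ are absent if $M_{ij}=0$, increasing if $M_{ij}=1$, decreasing if $M_{ij}=-1$; the result is an $M$-gridded permutation. The row-column graph $G_M$ is the bipartite graph on $\{1,\dots,m\}\cup\{1',\dots,n'\}$ with edge $ij'$ iff $M_{ij}\neq0$ (cell $(i,j)$ corresponds to edge $ij'$); $M$ is unicyclic if $G_M$ has exactly one cycle. In an $M$-gridding, a point is misplaced if it lies in a cell that does not correspond to an edge of the cycle of $G_M$. $M$ is a partial multiplication matrix: there are fixed $c_1,\dots,c_m,r_1,\dots,r_n\in\{\pm1\}$ with $M_{ij}=c_ir_j$ for each non-zero entry. Column $i$ is oriented left-to-right if $c_i=1$, right-to-left otherwise; row $j$ bottom-to-top if $r_j=1$, top-to-bottom otherwise. The orientation digraph of an $M$-gridded permutation has its points as vertices with $x\to y$ whenever $x,y$ lie in a common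 column of cells and $x$ precedes $y$ in that column's orientation, or in a common row of cells and $x$ precedes $y$ in that row's orientation. Let $\ell$ be the length of the cycle of $G_M$. A gridded $M$-coil is an $M$-gridded permutation of length $n>\ell$ with an ordering $v_1,\dots,v_n$ of its points and a labelling by $1,\dots,\ell$ of the cells corresponding to the edges of the cycle such that (C1) $v_i$ lies in cell $i\bmod\ell$ (residues in $\{1,\dots,\ell\}$); (C2) $v_{i-1}\to v_i$ for $1<i\le n$; (C3) $v_i\to v_{i-\ell-1}$ for $\ell+1<i\le n$; (C4) $v_{\ell+1}\to v_1$. An $M$-coil is a permutation having some $M$-gridding which is a gridded $M$-coil. *)

(* Defs.v *)
From mathcomp Require Import all_boot all_order all_algebra fingroup perm.
Set Implicit Arguments. Unset Strict Implicit. Unset Printing Implicit Defensive.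
Import GRing.Theory.

(* Conventions:
   - A gridding matrix with m columns and n rows is M : 'M[int]_(m, n),
     where M i j is the entry in column i (0-based, from the left) and
     row j (0-based, from the bottom).
   - A permutation of length L is pi : 'S_L; its points are (x, pi x) for
     x : 'I_L (0-based coordinates; the paper's point is (x+1, pi x + 1)).
   - A vertical grid line at the half-integer V + 1/2 is represented by the
     natural number V (similarly for horizontal lines).  v k is the line
     v_k, for k = 0..m. *)

Section Gridding.
Variables (m n L : nat).

Definition in_col (v : nat -> nat) (i : 'I_m) (x : nat) := (v i <= x < v i.+1)%N.
Definition in_row (h : nat -> nat) (j : 'I_n) (y : nat) := (h j <= y < h j.+1)%N.

Definition in_cell (pi : 'S_L) (v h : nat -> nat) (x : 'I_L) (i : 'I_m) (j : 'I_n) :=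
  in_col v i x && in_row h j (pi x).

Definition lines_ok (k : nat) (v : nat -> nat) :=
  v 0 = 0%N /\ v k = L /\ (forall t, (t < k)%N -> (v t <= v t.+1)%N).

Definition is_gridding (M : 'M[int]_(m, n)) (pi : 'S_L) (v h : nat -> nat) :=
  [/\ lines_ok m v, lines_ok n h &
    forall (i : 'I_m) (j : 'I_n),
      [/\ M i j = 0%R -> forall x, ~~ in_cell pi v h x i j,
          M i j = 1%R -> forall x y, in_cell pi v h x i j -> in_cell pi v h y i j ->
                         (x < y)%N -> (pi x < pi y)%N &
          M i j = (-1)%R -> forall x y, in_cell pi v h x i j -> in_cell pi v h y i j ->
                         (x < y)%N -> (pi y < pi x)%N]].

Definition misplaced (pi : 'S_L) (v h : nat -> nat) (C : {set 'I_m * 'I_n}) (x : 'I_L) :=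
  [exists i : 'I_m, exists j : 'I_n, in_cell pi v h x i j && ((i, j) \notin C)].

Definition num_misplaced pi v h C := #|[set x : 'I_L | misplaced pi v h C x]|.

Definition orient_arrow (c : 'I_m -> int) (r : 'I_n -> int)
   (pi : 'S_L) (v h : nat -> nat) (x y : 'I_L) :=
  [exists i : 'I_m, [&& in_col v i x, in_col v i y &
        if c i == 1%R then (x < y)%N else (y < x)%N]] ||
  [exists j : 'I_n, [&& in_row h j (pi x), in_row h j (pi y) &
        if r j == 1%R then (pi x < pi y)%N else (pi y < pi x)%N]].

End Gridding.

Definition rc_adj m n (M : 'M[int]_(m, n)) : rel ('I_m + 'I_n) :=
  fun a b => match a, b with
  | inl i, inr j => M i j != 0%R
  | inr j, inl i => M i j != 0%R
  | _, _ => false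
  end.

(* edge set (as cells) of a cycle given by its cyclic vertex sequence s *)
Definition cycle_cells m n (s : seq ('I_m + 'I_n)) : {set 'I_m * 'I_n} :=
  [set p : 'I_m * 'I_n |
     ((inl p.1 \in s) && (next s (inl p.1) == inr p.2)) ||
     ((inr p.2 \in s) && (next s (inr p.2) == inl p.1))].

Definition is_cycle_of m n (M : 'M[int]_(m, n)) (C : {set 'I_m * 'I_n}) :=
  exists s : seq ('I_m + 'I_n),
    [/\ uniq s, (2 < size s)%N, path.cycle (rc_adj M) s & C = cycle_cells s].

Definition unicyclic_with m n (M : 'M[int]_(m, n)) (C : {set 'I_m * 'I_n}) :=
  is_cycle_of M C /\ forall C', is_cycle_of M C' -> C' = C.

Definition unicyclic m n (M : 'M[int]_(m, n)) := exists C, unicyclic_with M C.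

Definition gridding_matrix m n (M : 'M[int]_(m, n)) :=
  forall i j, M i j \in [:: 0%R; 1%R; (-1)%R].

Definition pmm_signs m n (M : 'M[int]_(m, n)) (c : 'I_m -> int) (r : 'I_n -> int) :=
  [/\ forall i, c i = 1%R \/ c i = (-1)%R,
      forall j, r j = 1%R \/ r j = (-1)%R &
      forall i j, M i j != 0%R -> M i j = (c i * r j)%R].

(* gridded M-coil, where C is the set of cells of the cycle of G_M.
   0-based: the ordering is s : 'I_L -> 'I_L (v_{k+1} = s k), the cell
   labelling is e : 'I_#|C| -> cells (cell labelled t+1 is e t). *)
Definition gridded_coil m n (M : 'M[int]_(m, n)) (c : 'I_m -> int) (r : 'I_n -> int)
    (C : {set 'I_m * 'I_n}) L (pi : 'S_L) (v h : nat -> nat) :=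
  let ell := #|C| in
  [/\ is_gridding M pi v h, (ell < L)%N &
   exists (s : 'I_L -> 'I_L) (e : 'I_ell -> 'I_m * 'I_n),
     [/\ injective s, injective e & (forall t, e t \in C)] /\
     [/\
         forall (k : 'I_L) (t : 'I_ell), (t = k %% ell :> nat)%N ->
                    in_cell pi v h (s k) (e t).1 (e t).2,
        
         forall (k k' : 'I_L), k' = k.+1 :> nat -> orient_arrow c r pi v h (s k) (s k'),
         forall (k k' : 'I_L), (ell.+1 <= k)%N -> k' = (k - ell.+1)%N :> nat ->
                    orient_arrow c r pi v h (s k) (s k') &
         forall (k k' : 'I_L), k = ell :> nat -> k' = 0%N :> nat ->
                    orient_arrow c r pi v h (s k) (s k')]].

Definition coil m n (M : 'M[int]_(m, n)) c r C L (pi : 'S_L) :=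
  exists v h, gridded_coil M c r C pi v h.

(* Main.v *)
Require Import Defs.
From mathcomp Require Import all_boot all_order all_algebra fingroup perm.
From mathcomp Require Import zify.
Set Implicit Arguments. Unset Strict Implicit. Unset Printing Implicit Defensive.

Section Graph.
Variables (m n : nat) (M : 'M[int]_(m, n)).
Implicit Types (s : seq ('I_m + 'I_n)).

Definition cellof (d : 'I_m * 'I_n) (x y : 'I_m + 'I_n) : 'I_m * 'I_n :=
  match x, y with
  | inl i, inr j => (i, j)
  | inr j, inl i => (i, j)
  | _, _ => d end.

Lemma rc_adj_irr x : rc_adj M x x = false.
Proof. by case: x. Qed.

Lemma cc_mem d s x : x \in s -> rc_adj M x (next s x) ->
  cellof d x (next s x) \in cycle_cells s.
Proof.
move=> xs; rewrite /cycle_cells inE.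
case: x xs => [i|j] xs; case E: (next s _) => [i'|j'] //= _.
  by rewrite xs E eqxx.
by rewrite xs E eqxx orbT.
Qed.

Lemma cc_card s : #|cycle_cells s| <= size s.
Proof.
case: (cycle_cells s =P set0) => [->|/eqP/set0Pn [p0 _]]; first by rewrite cards0.
pose f x := cellof p0 x (next s x).
apply: (@leq_trans #|f @: [set x | x \in s]|); last first.
  apply: (leq_trans (leq_imset_card _ _)).
  by rewrite cardsE; apply: card_size.
apply: subset_leq_card; apply/subsetP => p.
rewrite /cycle_cells inE => /orP[/andP[H1 /eqP H2]|/andP[H1 /eqP H2]].
  by apply/imsetP; exists (inl p.1); rewrite ?inE // /f H2; case: p {H1 H2}.
by apply/imsetP; exists (inr p.2); rewrite ?inE // /f H2; case: p {H1 H2}.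
Qed.

Lemma cellof_inj d x y x' y' : rc_adj M x y -> rc_adj M x' y' ->
  cellof d x y = cellof d x' y' -> (x = x' /\ y = y') \/ (x = y' /\ y = x').
Proof.
by case: x => a; case: y => b //; case: x' => a'; case: y' => b' //= _ _ [-> ->];
  [left|right|right|left].
Qed.

Lemma cc_ge3 s : uniq s -> 2 < size s -> path.cycle (rc_adj M) s -> 3 <= #|cycle_cells s|.
Proof.
case: s => [|x0 [|x1 [|x2 s]]] //= U _.
case: s U => [|x3 s] U.
  by clear U; case: x0 => a; case: x1 => b; case: x2 => c; rewrite /= ?andbF.
rewrite /= => /and4P[a01 a12 a23 _].
move: U; rewrite /= !inE !negb_or => /and4P[/and4P[n01 n02 n03 _] /and3P[n12 n13 _] /andP[n23 _] _].
have nx0 : next [:: x0, x1, x2, x3 & s] x0 = x1 by rewrite /= eqxx.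
have nx1 : next [:: x0, x1, x2, x3 & s] x1 = x2 by rewrite /= eq_sym (negbTE n01) eqxx.
have nx2 : next [:: x0, x1, x2, x3 & s] x2 = x3.
  by rewrite /= eq_sym (negbTE n02) eq_sym (negbTE n12) eqxx.
set S := [:: x0, x1, x2, x3 & s].
have m0 : x0 \in S by rewrite inE eqxx.
have m1 : x1 \in S by rewrite !inE eqxx orbT.
have m2 : x2 \in S by rewrite !inE eqxx !orbT.
have d : 'I_m * 'I_n by clear -a01; case: x0 a01 => [a|a]; case: x1 => [b|b].
have c0 := cc_mem d m0; rewrite nx0 in c0; have {}c0 := c0 a01.
have c1 := cc_mem d m1; rewrite nx1 in c1; have {}c1 := c1 a12.
have c2 := cc_mem d m2; rewrite nx2 in c2; have {}c2 := c2 a23.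
have d01 : cellof d x0 x1 != cellof d x1 x2.
  by apply/eqP => /(cellof_inj a01 a12) [[E _]|[E _]]; [rewrite E eqxx in n01|rewrite E eqxx in n02].
have d02 : cellof d x0 x1 != cellof d x2 x3.
  by apply/eqP => /(cellof_inj a01 a23) [[E _]|[E _]]; [rewrite E eqxx in n02|rewrite E eqxx in n03].
have d12 : cellof d x1 x2 != cellof d x2 x3.
  by apply/eqP => /(cellof_inj a12 a23) [[E _]|[E _]]; [rewrite E eqxx in n12|rewrite E eqxx in n13].
apply: (@leq_trans #|cellof d x0 x1 |: [set cellof d x1 x2; cellof d x2 x3]|).
  by rewrite cardsU1 cards2 d12 !inE negb_or d01 d02.
by apply: subset_leq_card; apply/subsetP => p /setU1P [->|/set2P [->|->]].
Qed.

Lemma cc_col2 s i j1 j2 j3 : uniq s -> (i, j1) \in cycle_cells s ->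
  (i, j2) \in cycle_cells s -> (i, j3) \in cycle_cells s ->
  j1 != j2 -> j1 != j3 -> j2 != j3 -> False.
Proof.
move=> U.
have hA j j' : next s (inl i) == inr j -> next s (inl i) == inr j' -> j == j'.
  by move=> /eqP -> /eqP [->].
have hB j j' : (inr j \in s) && (next s (inr j) == inl i) ->
    (inr j' \in s) && (next s (inr j') == inl i) -> j == j'.
  move=> /andP[_ /eqP E1] /andP[_ /eqP E2].
  have := prev_next U (inr j); rewrite E1 -E2 prev_next //; by move=> [->].
rewrite !inE /= => /orP[/andP[_ a1]|b1] /orP[/andP[_ a2]|b2] /orP[/andP[_ a3]|b3] d12 d13 d23;
match goal with
| H1 : is_true (next s (inl _) == inr ?x), H2 : is_true (next s (inl _) == inr ?y),
  D : is_true (?x != ?y) |- _ => by rewrite (hA _ _ H1 H2) in D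
| H1 : is_true ((inr ?x \in s) && _), H2 : is_true ((inr ?y \in s) && _),
  D : is_true (?x != ?y) |- _ => by rewrite (hB _ _ H1 H2) in D
end.
Qed.

Lemma cc_row2 s j i1 i2 i3 : uniq s -> (i1, j) \in cycle_cells s ->
  (i2, j) \in cycle_cells s -> (i3, j) \in cycle_cells s ->
  i1 != i2 -> i1 != i3 -> i2 != i3 -> False.
Proof.
move=> U.
have hA i i' : next s (inr j) == inl i -> next s (inr j) == inl i' -> i == i'.
  by move=> /eqP -> /eqP [->].
have hB i i' : (inl i \in s) && (next s (inl i) == inr j) ->
    (inl i' \in s) && (next s (inl i') == inr j) -> i == i'.
  move=> /andP[_ /eqP E1] /andP[_ /eqP E2].
  have := prev_next U (inl i); rewrite E1 -E2 prev_next //; by move=> [->].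
rewrite !inE /= => /orP[b1|/andP[_ a1]] /orP[b2|/andP[_ a2]] /orP[b3|/andP[_ a3]] d12 d13 d23;
match goal with
| H1 : is_true (next s (inr _) == inl ?x), H2 : is_true (next s (inr _) == inl ?y),
  D : is_true (?x != ?y) |- _ => by rewrite (hA _ _ H1 H2) in D
| H1 : is_true ((inl ?x \in s) && _), H2 : is_true ((inl ?y \in s) && _),
  D : is_true (?x != ?y) |- _ => by rewrite (hB _ _ H1 H2) in D
end.
Qed.
End Graph.

Lemma path_map_iota (T : Type) (e : rel T) (f : nat -> T) k a :
  (forall i, a <= i -> i < a + k -> e (f i) (f i.+1)) ->
  path e (f a) (map f (iota a.+1 k)).
Proof.
elim: k a => [//|k IH] a H /=.
rewrite H ?addnS ?ltnS ?leq_addr //=; apply: IH => i H1 H2; apply: H; lia.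
Qed.

Lemma last_iota k a : last a (iota a.+1 k) = a + k.
Proof. by elim: k a => [|k IH] a /=; rewrite ?addn0 // IH addnS. Qed.

Lemma cycle_map_iota (T : Type) (e : rel T) (f : nat -> T) g : 0 < g ->
  (forall i, i.+1 < g -> e (f i) (f i.+1)) -> e (f g.-1) (f 0) ->
  path.cycle e (map f (iota 0 g)).
Proof.
case: g => [//|g] _ H1 H2 /=.
rewrite rcons_path path_map_iota /=; last by move=> i _ Hi; apply: H1.
by rewrite last_map last_iota.
Qed.

Section Walk.
Variables (m n : nat) (M : 'M[int]_(m, n)) (C : {set 'I_m * 'I_n}).
Variables (N : nat -> 'I_m * 'I_n) (tau : nat -> bool) (l : nat).
Hypotheses (HU : unicyclic_with M C) (Hl : #|C| = l) (Hl3 : 2 < l)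
  (HNp : forall d, N (d + l) = N d) (Htp : forall d, tau (d + l) = tau d)
  (Halt : forall d, tau d.+1 = ~~ tau d)
  (HM : forall d, M (N d).1 (N d).2 != 0%R) (Hne : forall d, N d != N d.+1)
  (Hstep : forall d, if tau d then (N d).1 = (N d.+1).1 else (N d).2 = (N d.+1).2).

Let sig d : 'I_m + 'I_n := if tau d then inl (N d).1 else inr (N d).2.

Let F1 d : N d.+1 = cellof (N 0) (sig d) (sig d.+1).
Proof.
have := Hstep d; rewrite /sig Halt; case: (tau d) => /= ->; by case: (N d.+1).
Qed.

Let F2 d : rc_adj M (sig d) (sig d.+1).
Proof.
have := Hstep d; have := HM d.+1; rewrite /sig Halt; case: (tau d) => /= H ->; exact: H.
Qed.

Let F3 d : sig d != sig d.+2.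
Proof.
have := Hstep d; have := Hstep d.+1; have := Hne d.+1.
rewrite /sig !Halt negbK; case: (tau d) => /= Hn E1 ->; apply/eqP => [[E2]];
  by move: Hn; case: (N d.+1) E1 E2 => a' b'; case: (N d.+2) => a b /= -> ->; rewrite eqxx.
Qed.

Let F4 d : sig (d + l) = sig d.
Proof. by rewrite /sig Htp HNp. Qed.

Let gap g : forall a, 0 < g -> sig a = sig (a + g) -> l <= g.
Proof.
elim: g {-2}g (leqnn g) => [|G IH] g Hg a g0 E; first by move: g0; rewrite leqn0 in Hg; move/eqP: Hg => ->.
rewrite leqNgt; apply/negP => gl.
set T := map (fun i => sig (a + i)) (iota 0 g).
have sT : size T = g by rewrite size_map size_iota.
case U: (uniq T).
  have g1 : g != 1 by apply/eqP => g1; move: (F2 a); rewrite -addn1 -g1 -E rc_adj_irr.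
  have g2 : g != 2 by apply/eqP => g2; move: (F3 a); rewrite -addn2 -g2 -E eqxx.
  have cyc : path.cycle (rc_adj M) T.
    apply: cycle_map_iota => // [i _|]; first by rewrite addnS; apply: F2.
    by rewrite addn0 E -{2}(prednK g0) addnS; apply: F2.
  have hc : is_cycle_of M (cycle_cells T).
    by exists T; split => //; rewrite sT; move: g0 g1 g2; clear; lia.
  have := cc_card T; rewrite (proj2 HU _ hc) Hl sT => lg.
  by move: (leq_ltn_trans lg gl); rewrite ltnn.
move/negbT: U => /(uniqPn (sig 0)) [i [j [ij jT]]].
rewrite sT in jT; rewrite !(nth_map 0) ?size_iota ?(ltn_trans ij) // !nth_iota ?(ltn_trans ij) //.
rewrite !add0n => Eij.
have L1 : l <= j - i.
  apply: (IH _ _ (a + i)); [lia | by rewrite subn_gt0 | by rewrite -addnA subnKC ?(ltnW ij)].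
lia.
Qed.

Lemma walk_in_C : N 1 \in C.
Proof.
set S := map sig (iota 0 l).
have U : uniq S.
  apply/negP => /negP /(uniqPn (sig 0)) [i [j [ij jS]]].
  rewrite size_map size_iota in jS.
  rewrite !(nth_map 0) ?size_iota ?(ltn_trans ij) // !nth_iota ?(ltn_trans ij) // !add0n => E.
  have : l <= j - i by apply: (gap (a := i)); rewrite ?subn_gt0 // subnKC // ltnW.
  lia.
have cyc : path.cycle (rc_adj M) S.
  apply: cycle_map_iota; [lia | move=> i _; apply: F2 | ].
  by rewrite -(F4 0) add0n -{2}(prednK (ltnW (ltnW Hl3))); apply: F2.
have hc : is_cycle_of M (cycle_cells S) by exists S; split => //; rewrite size_map size_iota.
rewrite -(proj2 HU _ hc) F1.
have ES : S = sig 0 :: sig 1 :: map sig (iota 2 (l - 2)).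
  by rewrite /S -{1}(subnK (ltnW Hl3)) addn2.
have nx : next S (sig 0) = sig 1 by rewrite ES /= eqxx.
rewrite -nx; apply: cc_mem; first by rewrite ES inE eqxx.
by rewrite nx; apply: F2.
Qed.
End Walk.

Lemma lines_mono L k w : lines_ok L k w -> forall a b, a <= b -> b <= k -> w a <= w b.
Proof.
move=> [_ [_ H]] a b; elim: b => [|b IH] Hab Hbk; first by rewrite leqn0 in Hab; move/eqP: Hab => ->.
case: (leqP a b) => Hab'.
  by apply: (leq_trans (IH Hab' (ltnW Hbk))); apply: H.
by have -> : a = b.+1 by lia.
Qed.

Lemma band_uniq L k w i i' x : lines_ok L k w -> i < k -> i' < k ->
  w i <= x < w i.+1 -> w i' <= x < w i'.+1 -> i = i'.
Proof.
move=> H ik i'k H1 H2.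
case: (ltngtP i i') => // lt.
  by have := lines_mono H lt (ltnW i'k); lia.
by have := lines_mono H lt (ltnW ik); lia.
Qed.

Lemma band_exists L k w x : lines_ok L k w -> x < L -> exists2 i, i < k & w i <= x < w i.+1.
Proof.
move=> [H0 [Hk _]] xL.
suff : forall j, j <= k -> x < w j -> exists2 i, i < j & w i <= x < w i.+1.
  by move=> /(_ k (leqnn k)); rewrite Hk => /(_ xL) [i ik Hi]; exists i.
elim=> [|j IH] jk xj; first by rewrite H0 in xj.
case: (ltnP x (w j)) => H.
  by have [i ij Hi] := IH (ltnW jk) H; exists i => //; apply: ltnW.
by exists j => //; rewrite H xj.
Qed.

Section Basic.
Variables (m n L : nat) (M : 'M[int]_(m, n)) (pi : 'S_L) (v h : nat -> nat).
Hypothesis Hg : is_gridding M pi v h.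

Lemma col_uniq (i i' : 'I_m) x : in_col v i x -> in_col v i' x -> i = i'.
Proof.
case: Hg => Hv _ _ H1 H2; apply: val_inj; exact: (band_uniq Hv (ltn_ord i) (ltn_ord i') H1 H2).
Qed.

Lemma row_uniq (j j' : 'I_n) y : in_row h j y -> in_row h j' y -> j = j'.
Proof.
case: Hg => _ Hh _ H1 H2; apply: val_inj; exact: (band_uniq Hh (ltn_ord j) (ltn_ord j') H1 H2).
Qed.

Lemma cell_uniq (x : 'I_L) (i i' : 'I_m) (j j' : 'I_n) : in_cell pi v h x i j -> in_cell pi v h x i' j' -> i = i' /\ j = j'.
Proof.
by move=> /andP[a b] /andP[a' b']; split; [apply: col_uniq a a'|apply: row_uniq b b'].
Qed.

Lemma cell_exists (x : 'I_L) : exists p : 'I_m * 'I_n, in_cell pi v h x p.1 p.2.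
Proof.
case: Hg => Hv Hh _.
have [i im Hi] := band_exists Hv (ltn_ord x).
have [j jn Hj] := band_exists Hh (ltn_ord (pi x)).
by exists (Ordinal im, Ordinal jn); rewrite /in_cell /in_col /in_row /= Hi Hj.
Qed.

Lemma cell_nz (x : 'I_L) (i : 'I_m) (j : 'I_n) : in_cell pi v h x i j -> M i j != 0%R.
Proof.
move=> H; apply/eqP => E; case: Hg => _ _ /(_ i j) [/(_ E x)]; by rewrite H.
Qed.

End Basic.

Definition btw3 (a b c : nat) := (a < b < c) || (c < b < a).

Lemma btw_thr a b c V : btw3 a b c -> (V <= a) = (V <= c) -> (V <= b) = (V <= a).
Proof. rewrite /btw3; case: (leqP V a); case: (leqP V b); case: (leqP V c); lia. Qed.

Lemma btw_band a b c lo hi : btw3 a b c -> lo <= a < hi -> lo <= c < hi -> lo <= b < hi.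
Proof. rewrite /btw3; lia. Qed.

Section Mono.
Variables (m n L : nat) (M : 'M[int]_(m, n)) (pi : 'S_L) (v h : nat -> nat).
Hypothesis Hg : is_gridding M pi v h.
Hypothesis HG : gridding_matrix M.

Lemma cell_iff1 (x y : 'I_L) (i : 'I_m) (j : 'I_n) : in_cell pi v h x i j -> in_cell pi v h y i j ->
  x != y -> M i j = 1%R -> (x < y) = (pi x < pi y).
Proof.
move=> Hx Hy xy E; case: Hg => _ _ /(_ i j) [_ H1 _].
case: (ltngtP x y) => [lt|lt|eq].
- by rewrite (H1 E x y Hx Hy lt).
- by have := H1 E y x Hy Hx lt; lia.
- by move: xy; rewrite (val_inj eq) eqxx.
Qed.

Lemma cell_iffm1 (x y : 'I_L) (i : 'I_m) (j : 'I_n) : in_cell pi v h x i j -> in_cell pi v h y i j ->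
  x != y -> M i j = (-1)%R -> (x < y) = (pi y < pi x).
Proof.
move=> Hx Hy xy E; case: Hg => _ _ /(_ i j) [_ _ H1].
case: (ltngtP x y) => [lt|lt|eq].
- by rewrite (H1 E x y Hx Hy lt).
- by have := H1 E y x Hy Hx lt; lia.
- by move: xy; rewrite (val_inj eq) eqxx.
Qed.

Lemma M_pm (i : 'I_m) (j : 'I_n) : M i j != 0%R -> M i j = 1%R \/ M i j = (-1)%R.
Proof. by have := HG i j; rewrite !inE => /or3P[] /eqP ->; auto; rewrite eqxx. Qed.

Lemma btw_ne (x y z : 'I_L) : btw3 x y z -> [/\ x != y, y != z & x != z].
Proof. by rewrite /btw3 => H; split; apply/eqP => E; move: H; rewrite E; lia. Qed.

Lemma btw_pi (x y z : 'I_L) (i : 'I_m) (j : 'I_n) :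
  in_cell pi v h x i j -> in_cell pi v h y i j -> in_cell pi v h z i j ->
  btw3 x y z = btw3 (pi x) (pi y) (pi z).
Proof.
move=> Hx Hy Hz.
suff key : x != y -> y != z -> x != z -> btw3 x y z = btw3 (pi x) (pi y) (pi z).
  case: (boolP (btw3 x y z)) => B.
    by case: (btw_ne B) => a1 a2 a3; rewrite -(key a1 a2 a3) B.
  case: (boolP (btw3 (pi x) (pi y) (pi z))) => B' //.
  have ij : forall a b : 'I_L, pi a != pi b -> a != b by move=> a b; apply: contra => /eqP ->.
  case: (btw_ne B') => a1 a2 a3.
  by have := key (ij _ _ a1) (ij _ _ a2) (ij _ _ a3); rewrite (negbTE B) B'.
move=> n1 n2 n3.
have n2' : z != y by rewrite eq_sym.
have n1' : y != x by rewrite eq_sym.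
have /M_pm [E|E] := cell_nz Hg Hx.
- rewrite /btw3 (cell_iff1 Hx Hy n1 E) (cell_iff1 Hy Hz n2 E) (cell_iff1 Hz Hy n2' E).
  by rewrite (cell_iff1 Hy Hx n1' E).
- rewrite /btw3 (cell_iffm1 Hx Hy n1 E) (cell_iffm1 Hy Hz n2 E) (cell_iffm1 Hz Hy n2' E).
  by rewrite (cell_iffm1 Hy Hx n1' E) orbC andbC [X in _ || X]andbC.
Qed.

End Mono.

Lemma flip_once (f : nat -> nat) (l L : nat) (dd : bool) (V i1 i2 : nat) : 0 < l ->
  (forall j, l <= j -> j.+1 < L -> j %% l = i1 %% l ->
     if dd then f j < f (j - l) else f (j - l) < f j) ->
  l <= i1 -> i1 < i2 -> i2.+1 < L -> i1 %% l = i2 %% l ->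
  (V <= f i1) != (V <= f (i1 - l)) -> (V <= f i2) != (V <= f (i2 - l)) -> False.
Proof.
move=> l0 H li1 i12 i2L md F1 F2.
have [u Eu] : exists u, i2 = i1 + u.+1 * l.
  have : l %| i2 - i1 by rewrite -eqn_mod_dvd ?(ltnW i12) // md.
  case/dvdnP => k Ek; case: k Ek => [|k] Ek; first by move: i12; rewrite -subn_gt0 Ek.
  by exists k; rewrite -Ek subnKC // ltnW.
have chain : forall w, i1 + w * l + 1 < L ->
    if dd then f (i1 + w * l) <= f i1 else f i1 <= f (i1 + w * l).
  elim=> [|w IH] Hw; first by rewrite mul0n addn0; case: (dd).
  have Hj := H (i1 + w.+1 * l).
  have md' : (i1 + w.+1 * l) %% l = i1 %% l by rewrite mulSn addnCA modnDl addnC modnMDl.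
  have E' : i1 + w.+1 * l - l = i1 + w * l by rewrite mulSn addnCA addKn.
  move: Hj; rewrite E' => Hj; have {Hj} := fun a b => Hj a b md'.
  move: IH Hw; rewrite mulSn; set P := w * l; case: (dd) => IH Hw Hj.
  - have A := IH ltac:(lia). have B := Hj ltac:(lia) ltac:(lia). lia.
  - have A := IH ltac:(lia). have B := Hj ltac:(lia) ltac:(lia). lia.
have C := chain u.
have H1 := H i1 li1 ltac:(lia) erefl.
have H2 := H i2 ltac:(lia) i2L (esym md).
have E2 : i2 - l = i1 + u * l by rewrite Eu mulSn addnCA addKn.
rewrite E2 in F2 H2.
move: C H1 H2 F1 F2; case: (dd) => C H1 H2; have {}C := C ltac:(lia);
  case: (leqP V (f i1)); case: (leqP V (f (i1 - l))); case: (leqP V (f i2));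
  case: (leqP V (f (i1 + u * l))); lia.
Qed.

Lemma btw_of (dd : bool) q p r : (if dd then q < p else p < q) -> (if dd then p < r else r < p) ->
  btw3 q p r /\ (if dd then q < r else r < q).
Proof. rewrite /btw3; case: dd; lia. Qed.

Section Main.
Variables (m n : nat) (M : 'M[int]_(m, n)) (c : 'I_m -> int) (r : 'I_n -> int)
  (C : {set 'I_m * 'I_n}).
Hypotheses (HG : gridding_matrix M) (HP : pmm_signs M c r) (HU : unicyclic_with M C).
Variables (L : nat) (pi : 'S_L) (v0 h0 v h : nat -> nat).
Hypotheses (Hg0 : is_gridding M pi v0 h0) (Hg : is_gridding M pi v h).
Local Notation l := #|C|.
Hypotheses (HlL : l < L) (Hl3 : 2 < l).
Variables (s : 'I_L -> 'I_L) (e : 'I_l -> 'I_m * 'I_n).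
Hypotheses (Hs : injective s) (He : injective e) (HeC : forall t, e t \in C).
Hypothesis HC1 : forall (k : 'I_L) (t : 'I_l), t = k %% l :> nat ->
  in_cell pi v0 h0 (s k) (e t).1 (e t).2.
Hypothesis HC2 : forall k k' : 'I_L, k' = k.+1 :> nat -> orient_arrow c r pi v0 h0 (s k) (s k').
Hypothesis HC3 : forall k k' : 'I_L, l.+1 <= k -> k' = k - l.+1 :> nat ->
  orient_arrow c r pi v0 h0 (s k) (s k').

Let lpos : 0 < l. Proof. exact: ltn_trans Hl3. Qed.
Let x0 : 'I_L := Ordinal (leq_ltn_trans (leq0n l) HlL).
Definition S k := s (insubd x0 k).
Definition Ec q := e (Ordinal (ltn_pmod q lpos)).

Lemma S_val (k : 'I_L) : S k = s k. Proof. by rewrite /S valKd. Qed.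

Lemma SC1 k : k < L -> in_cell pi v0 h0 (S k) (Ec k).1 (Ec k).2.
Proof. by move=> kL; apply: HC1; rewrite /= val_insubd kL. Qed.

Lemma SC2 k : k.+1 < L -> orient_arrow c r pi v0 h0 (S k) (S k.+1).
Proof. by move=> kL; apply: HC2; rewrite !val_insubd kL (ltnW kL). Qed.

Lemma SC3 k : l.+1 <= k -> k < L -> orient_arrow c r pi v0 h0 (S k) (S (k - l.+1)).
Proof.
move=> lk kL; apply: HC3; rewrite ?val_insubd ?kL //.
by rewrite (leq_ltn_trans (leq_subr _ _) kL).
Qed.

Lemma S_inj k k' : k < L -> k' < L -> S k = S k' -> k = k'.
Proof.
move=> kL k'L /Hs /(congr1 val); by rewrite !val_insubd kL k'L.
Qed.

Lemma Ec_mod q q' : q %% l = q' %% l -> Ec q = Ec q'.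
Proof. by move=> E; rewrite /Ec; congr e; apply: val_inj. Qed.

Lemma Ec_inj q q' : Ec q = Ec q' -> q %% l = q' %% l.
Proof. by move/He/(congr1 val). Qed.

Lemma arrow_cases (x y : 'I_L) (a a' : 'I_m) (b b' : 'I_n) :
  orient_arrow c r pi v0 h0 x y -> in_cell pi v0 h0 x a b -> in_cell pi v0 h0 y a' b' ->
  (a = a' /\ (if c a == 1%R then x < y else y < x)) \/
  (b = b' /\ (if r b == 1%R then pi x < pi y else pi y < pi x)).
Proof.
move=> /orP[/existsP [i /and3P [Hx Hy o]] | /existsP [j /and3P [Hx Hy o]]]
  /andP[Ha Hb] /andP[Ha' Hb'].
  by left; have E1 := col_uniq Hg0 Hx Ha; have E2 := col_uniq Hg0 Hy Ha'; subst.
by right; have E1 := row_uniq Hg0 Hx Hb; have E2 := row_uniq Hg0 Hy Hb'; subst.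
Qed.

Lemma mod_succ_ne q : q %% l != q.+1 %% l.
Proof.
rewrite -addn1 -modnDml; have := ltn_pmod q lpos; move: (q %% l) => k.
case: (ltngtP (k + 1) l) => H _.
- by rewrite (modn_small H); lia.
- lia.
- by rewrite H modnn; lia.
Qed.

Lemma mod_succ2_ne q : q %% l != q.+2 %% l.
Proof.
rewrite -addn2 -modnDml; have := ltn_pmod q lpos; move: (q %% l) => k.
case: (ltnP (k + 2) l) => H kl.
- by rewrite (modn_small H); lia.
- have E : k + 2 = (k + 2 - l) + l by rewrite subnK.
  rewrite E modnDr modn_small; lia.
Qed.

Lemma pair q : Ec q != Ec q.+1 /\ ((Ec q).1 = (Ec q.+1).1 \/ (Ec q).2 = (Ec q.+1).2).
Proof.
split; first by apply/eqP => /Ec_inj /eqP; rewrite (negbTE (mod_succ_ne q)).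
set k := q %% l.
have kl : k < l by apply: ltn_pmod.
have H1 := SC1 (ltn_trans kl HlL).
have H2 := SC1 (leq_ltn_trans kl HlL).
have A := SC2 (leq_ltn_trans kl HlL).
have E1 : Ec k = Ec q by apply: Ec_mod; rewrite modn_mod.
have E2 : Ec k.+1 = Ec q.+1 by apply: Ec_mod; rewrite /k -[(q %% l).+1]addn1 -[q.+1]addn1 modnDml.
rewrite E1 in H1; rewrite E2 in H2.
by case: (arrow_cases A H1 H2) => [[-> _]|[-> _]]; auto.
Qed.


Lemma alt q : ((Ec q).1 == (Ec q.+1).1) = ~~ ((Ec q.+1).1 == (Ec q.+2).1).
Proof.
have [n1 s1] := pair q; have [n2 s2] := pair q.+1.
have n3 : Ec q != Ec q.+2 by apply/eqP => /Ec_inj /eqP; rewrite (negbTE (mod_succ2_ne q)).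
have [[s0 [U _ _ EC]] _] := HU.
have inC : forall q', ((Ec q').1, (Ec q').2) \in cycle_cells s0.
  by move=> q'; rewrite -EC -surjective_pairing HeC.
have iA := inC q; have iB := inC q.+1; have iD := inC q.+2.
move: n1 n2 n3 s1 s2 iA iB iD; case: (Ec q) => [a1 a2]; case: (Ec q.+1) => [b1 b2];
  case: (Ec q.+2) => [d1 d2] /= n1 n2 n3 s1 s2 iA iB iD.
case: (a1 =P b1) => e1; case: (b1 =P d1) => e2 //=.
- subst; exfalso; apply: (cc_col2 U iA iB iD).
  + by move: n1; rewrite xpair_eqE eqxx.
  + by move: n3; rewrite xpair_eqE eqxx.
  + by move: n2; rewrite xpair_eqE eqxx.
- case: s1 => // E1; case: s2 => // E2; subst; exfalso; apply: (cc_row2 U iA iB iD).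
  + by apply/eqP.
  + by move: n3; rewrite xpair_eqE eqxx andbT.
  + by apply/eqP.
Qed.

Let d0 := Ec 0.
Definition Ncell (x : 'I_L) : 'I_m * 'I_n :=
  odflt d0 [pick p : 'I_m * 'I_n | in_cell pi v h x p.1 p.2].

Lemma Ncell_in x : in_cell pi v h x (Ncell x).1 (Ncell x).2.
Proof.
rewrite /Ncell; case: pickP => [p //|H].
by have [p Hp] := cell_exists Hg x; move: (H p); rewrite Hp.
Qed.

Lemma Ncell_eq x (i : 'I_m) (j : 'I_n) : in_cell pi v h x i j -> Ncell x = (i, j).
Proof.
by move=> H; have [E1 E2] := cell_uniq Hg (Ncell_in x) H; rewrite -E1 -E2 -surjective_pairing.
Qed.

Definition sameC (x y : 'I_L) := [forall t : 'I_m.+1, (v t <= x) == (v t <= y)].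
Definition sameR (x y : 'I_L) := [forall t : 'I_n.+1, (h t <= pi x) == (h t <= pi y)].
Definition sameNb x y := sameC x y && sameR x y.

Lemma sameC_col x y (i : 'I_m) : sameC x y -> in_col v i x -> in_col v i y.
Proof.
move=> /forallP H; rewrite /in_col !ltnNge.
have := H (@Ordinal m.+1 i (ltnW (ltn_ord i))); have := H (@Ordinal m.+1 i.+1 (ltn_ord i)).
by rewrite /= => /eqP -> /eqP ->.
Qed.

Lemma sameR_row x y (j : 'I_n) : sameR x y -> in_row h j (pi x) -> in_row h j (pi y).
Proof.
move=> /forallP H; rewrite /in_row !ltnNge.
have := H (@Ordinal n.+1 j (ltnW (ltn_ord j))); have := H (@Ordinal n.+1 j.+1 (ltn_ord j)).
by rewrite /= => /eqP -> /eqP ->.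
Qed.

Lemma sameN_cell x y (i : 'I_m) (j : 'I_n) : sameNb x y -> in_cell pi v h x i j -> in_cell pi v h y i j.
Proof.
by move=> /andP[H1 H2] /andP[A B]; rewrite /in_cell (sameC_col H1 A) (sameR_row H2 B).
Qed.

Lemma sameN_N x y : sameNb x y -> Ncell y = Ncell x.
Proof. by move=> H; rewrite [Ncell x]surjective_pairing; apply: Ncell_eq; apply: sameN_cell H (Ncell_in x). Qed.


Lemma cell_sign (x y : 'I_L) (a : 'I_m) (b : 'I_n) :
  in_cell pi v0 h0 x a b -> in_cell pi v0 h0 y a b -> x != y ->
  (if c a == 1%R then x < y else y < x) = (if r b == 1%R then pi x < pi y else pi y < pi x).
Proof.
move=> Hx Hy xy; have nz := cell_nz Hg0 Hx.
have yx : y != x by rewrite eq_sym.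
have m1 : ((-1 : int) == 1) = false by [].
case: HP => Hc Hr Hm; have Eab := Hm a b nz.
case: (Hc a) => ca; case: (Hr b) => rb; rewrite ca rb in Eab *; rewrite ?eqxx ?m1.
- by rewrite (cell_iff1 Hg0 Hx Hy xy) // Eab mulr1.
- by rewrite (cell_iffm1 Hg0 Hx Hy xy) // Eab mul1r.
- by rewrite (cell_iffm1 Hg0 Hy Hx yx) // Eab mulr1.
- by rewrite (cell_iff1 Hg0 Hy Hx yx) // Eab mulrNN mulr1.
Qed.

Lemma stepL i : l <= i -> i.+1 < L -> sameNb (S i) (S (i - l)) ->
  (if (Ec i).1 == (Ec i.+1).1 then (Ncell (S i)).1 = (Ncell (S i.+1)).1
   else (Ncell (S i)).2 = (Ncell (S i.+1)).2) /\ Ncell (S i) != Ncell (S i.+1).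
Proof.
move=> li iL Hs'.
have iL' : i < L := ltnW iL.
have hQ := SC1 iL'; have hP := SC1 iL.
have hR := SC1 (leq_ltn_trans (leq_subr l i) iL').
have ER : Ec (i - l) = Ec i by apply: Ec_mod; rewrite -{2}(subnK li) modnDr.
rewrite ER in hR.
have aQP := SC2 iL.
have aPR : orient_arrow c r pi v0 h0 (S i.+1) (S (i - l)).
  by have := SC3 (li : l.+1 <= i.+1) iL; rewrite subSS.
have [nd sh] := pair i.
have [Hc Hr] := andP Hs'.
move: hQ hP hR aQP aPR nd sh Hc Hr Hs'.
set Q := S i; set P := S i.+1; set R := S (i - l).
case: (Ec i) => [a b]; case: (Ec i.+1) => [a' b'] /= hQ hP hR aQP aPR nd sh Hc Hr Hs'.
case/andP: hQ => cQ0 rQ0; case/andP: hP => cP0 rP0; case/andP: hR => cR0 rR0.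
case/andP: (Ncell_in Q) => cQ rQ; case/andP: (Ncell_in P) => cP rP.
case: (a =P a') => [ea|na] /=.
- subst a'. have bb : b != b' by move: nd; rewrite xpair_eqE eqxx.
  have o1 : if c a == 1%R then Q < P else P < Q.
    case: (arrow_cases aQP (introT andP (conj cQ0 rQ0)) (introT andP (conj cP0 rP0))) => [[_ o]|[eb _]] //.
    by rewrite eb eqxx in bb.
  have o2 : if c a == 1%R then P < R else R < P.
    case: (arrow_cases aPR (introT andP (conj cP0 rP0)) (introT andP (conj cR0 rR0))) => [[_ o]|[eb _]] //.
    by rewrite eb eqxx in bb.
  have [B3 _] := btw_of o1 o2.
  have HcP : sameC Q P.
    by apply/forallP => t; rewrite (btw_thr B3 (eqP (forallP Hc t))).
  split; first by have := col_uniq Hg (sameC_col HcP cQ) cP.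
  apply/eqP => E.
  have cP' : in_cell pi v h P (Ncell Q).1 (Ncell Q).2 by rewrite E; apply: Ncell_in.
  have cR := sameN_cell Hs' (Ncell_in Q).
  have := btw_pi Hg HG (Ncell_in Q) cP' cR; rewrite B3 => /esym B3'.
  have rP' : in_row h0 b (pi P) := btw_band B3' rQ0 rR0.
  by move: bb; rewrite (row_uniq Hg0 rP' rP0) eqxx.
- have eb : b = b' by case: sh => // /na.
  subst b'.
  have o1 : if r b == 1%R then pi Q < pi P else pi P < pi Q.
    case: (arrow_cases aQP (introT andP (conj cQ0 rQ0)) (introT andP (conj cP0 rP0))) => [[ea _]|[_ o]] //.
  have o2 : if r b == 1%R then pi P < pi R else pi R < pi P.
    case: (arrow_cases aPR (introT andP (conj cP0 rP0)) (introT andP (conj cR0 rR0))) => [[ea _]|[_ o]] //.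
    by rewrite ea in na.
  have [B3 _] := btw_of o1 o2.
  have HrP : sameR Q P.
    by apply/forallP => t; rewrite (btw_thr B3 (eqP (forallP Hr t))).
  split; first by have := row_uniq Hg (sameR_row HrP rQ) rP.
  apply/eqP => E.
  have cP' : in_cell pi v h P (Ncell Q).1 (Ncell Q).2 by rewrite E; apply: Ncell_in.
  have cR := sameN_cell Hs' (Ncell_in Q).
  have := btw_pi Hg HG (Ncell_in Q) cP' cR; rewrite B3 => B3'.
  have cP'' : in_col v0 a P := btw_band B3' cQ0 cR0.
  by apply: na; have := col_uniq Hg0 cP'' cP0.
Qed.


Lemma ordchain i : l <= i -> i.+1 < L ->
  (if c (Ec i).1 == 1%R then S i < S (i - l) else S (i - l) < S i) /\
  (if r (Ec i).2 == 1%R then pi (S i) < pi (S (i - l)) else pi (S (i - l)) < pi (S i)).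
Proof.
move=> li iL.
have iL' : i < L := ltnW iL.
have hQ := SC1 iL'; have hP := SC1 iL.
have hR := SC1 (leq_ltn_trans (leq_subr l i) iL').
have ER : Ec (i - l) = Ec i by apply: Ec_mod; rewrite -{2}(subnK li) modnDr.
rewrite ER in hR.
have QR : S i != S (i - l).
  apply/eqP => /S_inj; rewrite iL' (leq_ltn_trans (leq_subr l i) iL') => /(_ isT isT).
  by move=> E; have := lpos; move: li E; clear; lia.
have aQP := SC2 iL.
have aPR : orient_arrow c r pi v0 h0 (S i.+1) (S (i - l)).
  by have := SC3 (li : l.+1 <= i.+1) iL; rewrite subSS.
have [nd sh] := pair i.
move: hQ hP hR aQP aPR nd sh QR.
set Q := S i; set P := S i.+1; set R := S (i - l).
case: (Ec i) => [a b]; case: (Ec i.+1) => [a' b'] /= hQ hP hR aQP aPR nd sh QR.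
have CS := cell_sign hQ hR QR.
case: (a =P a') => [ea|na] /=.
- subst a'. have bb : b != b' by move: nd; rewrite xpair_eqE eqxx.
  have o1 : if c a == 1%R then Q < P else P < Q.
    case: (arrow_cases aQP hQ hP) => [[_ o]|[eb _]] //.
    by rewrite eb eqxx in bb.
  have o2 : if c a == 1%R then P < R else R < P.
    case: (arrow_cases aPR hP hR) => [[_ o]|[eb _]] //.
    by rewrite eb eqxx in bb.
  have [_ o3] := btw_of o1 o2.
  by rewrite -CS.
- have eb : b = b' by case: sh => // /na.
  subst b'.
  have o1 : if r b == 1%R then pi Q < pi P else pi P < pi Q.
    case: (arrow_cases aQP hQ hP) => [[ea _]|[_ o]] //.
  have o2 : if r b == 1%R then pi P < pi R else pi R < pi P.
    case: (arrow_cases aPR hP hR) => [[ea _]|[_ o]] //.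
    by rewrite ea in na.
  have [_ o3] := btw_of o1 o2.
  by rewrite CS.
Qed.


Lemma window k : l <= k -> k + l + 1 < L ->
  (forall d, d <= l -> sameNb (S (k + d)) (S (k + d - l))) -> Ncell (S k) \in C.
Proof.
move=> lk kL Hd.
pose W0 d := Ncell (S (k + d %% l)).
pose t0 d := (Ec (k + d)).1 == (Ec (k + d).+1).1.
have Np : forall d, W0 (d + l) = W0 d by move=> d; rewrite /W0 modnDr.
have tp : forall d, t0 (d + l) = t0 d.
  move=> d; rewrite /t0 (@Ec_mod (k + (d + l)) (k + d)); last by rewrite addnA modnDr.
  by rewrite (@Ec_mod (k + (d + l)).+1 (k + d).+1) // addnA -addSn modnDr.
have ta : forall d, t0 d.+1 = ~~ t0 d by move=> d; rewrite /t0 addnS (alt (k + d)) negbK.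
have key : forall d, W0 d.+1 = Ncell (S (k + d %% l).+1) /\
    (if t0 d then (W0 d).1 = (W0 d.+1).1 else (W0 d).2 = (W0 d.+1).2) /\ W0 d != W0 d.+1.
  move=> d.
  have dl := ltn_pmod d lpos.
  have E1 : W0 d.+1 = Ncell (S (k + d %% l).+1).
    rewrite /W0 -[d.+1]addn1 -modnDml.
    case: (ltngtP (d %% l + 1) l) => H.
    - by rewrite modn_small // addn1 addnS.
    - by move: H dl; clear; lia.
    - rewrite H modnn addn0.
      have := sameN_N (Hd l (leqnn l)); rewrite addnK => ->.
      by rewrite -{1}H addnA addn1.
  have Hs0 := Hd (d %% l) (ltnW dl).
  have iL : (k + d %% l).+1 < L.
    by move: kL dl; clear; lia.
  have [st ne] := stepL (leq_trans lk (leq_addr _ _)) iL Hs0.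
  have Et : t0 d = ((Ec (k + d %% l)).1 == (Ec (k + d %% l).+1).1).
    rewrite /t0 (@Ec_mod (k + d) (k + d %% l)); last by rewrite modnDmr.
    by rewrite (@Ec_mod (k + d).+1 (k + d %% l).+1) // -[(k + d).+1]addSn -[(k + d %% l).+1]addSn modnDmr.
  by rewrite E1 Et; split => //; split.
have X : (fun d => W0 (d + l.-1)) 1 \in C.
  apply: (@walk_in_C m n M C (fun d => W0 (d + l.-1)) (fun d => t0 (d + l.-1)) l HU erefl Hl3) => /= d.
  - by rewrite addnAC Np.
  - by rewrite addnAC tp.
  - by rewrite addSn ta.
  - by apply: (cell_nz Hg (Ncell_in _)).
  - by rewrite addSn; case: (key (d + l.-1)) => _ [_ ->].
  - by rewrite addSn; case: (key (d + l.-1)) => _ [H _].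
by move: X; rewrite /= add1n prednK // -{1}[l]add0n Np /W0 mod0n addn0.
Qed.


Definition badb i := [&& l <= i, i.+1 < L & ~~ sameNb (S i) (S (i - l))].

Definition sep i (t : 'I_m.+1 + 'I_n.+1) : bool :=
  match t with
  | inl t => (v t <= S i) != (v t <= S (i - l))
  | inr t => (h t <= pi (S i)) != (h t <= pi (S (i - l)))
  end.

Definition sepl i := odflt (inl ord0) [pick t | sep i t].

Lemma sepl_ok i : ~~ sameNb (S i) (S (i - l)) -> sep i (sepl i).
Proof.
rewrite /sameNb negb_and /sepl => /orP[/forallPn [t Ht]|/forallPn [t Ht]];
  case: pickP => // /(_ _) H.
- by move: (H (inl t)); rewrite /= Ht.
- by move: (H (inr t)); rewrite /= Ht.
Qed.

Definition key i : 'I_l * ('I_m.+1 + 'I_n.+1) := (Ordinal (ltn_pmod i lpos), sepl i).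

Lemma key_lt i1 i2 : badb i1 -> badb i2 -> key i1 = key i2 -> i1 < i2 -> False.
Proof.
move=> /and3P[l1 L1 b1] /and3P[l2 L2 b2] [E1 E2] lt12.
have s1 := sepl_ok b1; have s2 := sepl_ok b2.
rewrite E2 in s1.
have md : forall j, j %% l = i1 %% l -> Ec j = Ec i1 by move=> j Hj; apply: Ec_mod.
move: s1 s2; case: (sepl i2) => t /= s1 s2.
- apply: (@flip_once (fun j => nat_of_ord (S j)) l L (c (Ec i1).1 == 1%R) (v t) i1 i2 lpos) => //.
  by move=> j lj jL Hj; have [o _] := ordchain lj jL; rewrite (md j Hj) in o.
- apply: (@flip_once (fun j => nat_of_ord (pi (S j))) l L (r (Ec i1).2 == 1%R) (h t) i1 i2 lpos) => //.
  by move=> j lj jL Hj; have [_ o] := ordchain lj jL; rewrite (md j Hj) in o.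
Qed.

Lemma key_inj i1 i2 : badb i1 -> badb i2 -> key i1 = key i2 -> i1 = i2.
Proof.
move=> b1 b2 E; case: (ltngtP i1 i2) => // H; first by case: (key_lt b1 b2 E H).
by case: (key_lt b2 b1 (esym E) H).
Qed.


Lemma misplaced_notin x : misplaced pi v h C x -> Ncell x \notin C.
Proof.
by move=> /existsP [i /existsP [j /andP [H1 H2]]]; rewrite (Ncell_eq H1).
Qed.

Definition Aset := [set k : 'I_L | (k < l) || (L <= k + l + 1) ||
   [exists d : 'I_l.+1, badb (k + d)]].

Lemma pre_sub : s @^-1: [set x | misplaced pi v h C x] \subset Aset.
Proof.
apply/subsetP => k; rewrite !inE => /misplaced_notin; rewrite -S_val => HN.
case: (ltnP k l) => //= lk; case: (leqP L (k + l + 1)) => //= kL.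
apply: contraT => /existsPn Hb.
suff W : Ncell (S k) \in C by rewrite W in HN.
apply: window => // d dl.
have Hb' : ~~ badb (k + d) := Hb (Ordinal (dl : d < l.+1)).
have c1 : l <= k + d by rewrite (leq_trans lk (leq_addr _ _)).
have c2 : (k + d).+1 < L by move: kL dl; move: (nat_of_ord k) #|C| => a b; clear; lia.
by move: Hb'; rewrite /badb c1 c2 /= => /negPn.
Qed.

Lemma card_A1 : #|[set k : 'I_L | k < l]| <= l.
Proof.
rewrite -{2}(card_ord l).
apply: (@leq_card_in _ _ (fun k : 'I_L => insubd (Ordinal lpos) (val k))) => k1 k2.
rewrite !inE => H1 H2 /(congr1 val); rewrite !val_insubd H1 H2; exact: val_inj.
Qed.

Lemma card_A2 : #|[set k : 'I_L | L <= k + l + 1]| <= l.+2.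
Proof.
rewrite -(card_ord l.+2).
apply: (@leq_card_in _ _ (fun k : 'I_L => insubd (ord0 : 'I_l.+2) (L - val k))) => k1 k2.
rewrite !inE => H1 H2 /(congr1 val); rewrite !val_insubd.
have lt1 := ltn_ord k1; have lt2 := ltn_ord k2.
have -> : L - k1 < l.+2 by move: H1 lt1; move: (nat_of_ord k1) #|C| => a b; clear; lia.
have -> : L - k2 < l.+2 by move: H2 lt2; move: (nat_of_ord k2) #|C| => a b; clear; lia.
move=> E; have E' : L - nat_of_ord k1 = L - nat_of_ord k2 := E; apply: val_inj => /=; move: E' lt1 lt2; move: (nat_of_ord k1) (nat_of_ord k2) => a b; clear; lia.
Qed.

Lemma card_A3 : #|[set k : 'I_L | [exists d : 'I_l.+1, badb (k + d)]]|
   <= l.+1 * (l * (m.+1 + n.+1)).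
Proof.
have -> : l.+1 * (l * (m.+1 + n.+1)) = #|{: 'I_l.+1 * ('I_l * ('I_m.+1 + 'I_n.+1))}|.
  by rewrite !card_prod card_sum !card_ord.
pose pd (k : 'I_L) := odflt ord0 [pick d : 'I_l.+1 | badb (k + d)].
have pdok : forall k : 'I_L, [exists d : 'I_l.+1, badb (k + d)] -> badb (k + pd k).
  move=> k /existsP [d Hd]; rewrite /pd; case: pickP => // /(_ d); by rewrite Hd.
apply: (@leq_card_in _ _ (fun k : 'I_L => (pd k, key (k + pd k)))) => k1 k2.
rewrite !inE => H1 H2 /pair_equal_spec [E1 E2].
have b1 := pdok _ H1; have b2 := pdok _ H2.
rewrite -E1 in E2 b2.
have := key_inj b1 b2 E2 => /eqP; rewrite eqn_add2r => /eqP; exact: val_inj.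
Qed.

Lemma count_bound : num_misplaced pi v h C <= l + l.+2 + l.+1 * (l * (m.+1 + n.+1)).
Proof.
rewrite /num_misplaced -(card_preimset _ Hs).
apply: (leq_trans (subset_leq_card pre_sub)).
have -> : Aset = [set k : 'I_L | k < l] :|: [set k : 'I_L | L <= k + l + 1] :|:
    [set k : 'I_L | [exists d : 'I_l.+1, badb (k + d)]].
  by apply/setP => k; rewrite !inE.
apply: (leq_trans (leq_card_setU _ _)); apply: leq_add; last exact: card_A3.
apply: (leq_trans (leq_card_setU _ _)); apply: leq_add; [exact: card_A1 | exact: card_A2].
Qed.

End Main.


Theorem lemma5p6 (m n : nat) (M : 'M[int]_(m, n)) (c : 'I_m -> int) (r : 'I_n -> int)
    (C : {set 'I_m * 'I_n}) :
  gridding_matrix M -> pmm_signs M c r -> unicyclic_with M C ->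
  exists B : nat, forall (L : nat) (pi : 'S_L), coil M c r C pi ->
    forall v h : nat -> nat, is_gridding M pi v h -> (num_misplaced pi v h C <= B)%N.
Proof.
move=> HG HP HU.
have Hl3 : 2 < #|C|.
  by case: (HU) => [[s0 [U sz cyc EC]] _]; rewrite EC; exact: cc_ge3 U sz cyc.
exists (#|C| + #|C|.+2 + #|C|.+1 * (#|C| * (m.+1 + n.+1))).
move=> L pi [v0 [h0 [Hg0 HlL [s [e [[Hs He HeC] [HC1 HC2 HC3 _]]]]]]] v h Hg.
exact: (count_bound HG HP HU Hg0 Hg HlL Hl3 Hs He HeC HC1 HC2 HC3).
Qed.
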